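(* Let $n\ge2$, $V>0$, $c\in(0,\infty)$, and for $i,j\in[n]$ let $\Sigma_n^{\mathrm{sb}}$ have entries $\frac{V\pi}{i+j}$ and $\Sigma_n^{\mathrm{sp}}$ have entries $\frac{4V\pi^2}{(i+1)(j+1)}$. Let $\Sigma_n^{\mathrm{cr}}=\Sigma_n^{\mathrm{sb}}+c\Sigma_n^{\mathrm{sp}}$ if $c\le1$ and $\Sigma_n^{\mathrm{cr}}=\frac1c\Sigma_n^{\mathrm{sb}}+\Sigma_n^{\mathrm{sp}}$ if $c>1$. Let $\Sigma_n^{\mathrm{sb}}=L^{\mathrm{sb}}U^{\mathrm{sb}}$ be the (unique) LU decomposition of $\Sigma_n^{\mathrm{sb}}$ with $L^{\mathrm{sb}}$ unit lower triangular and $U^{\mathrm{sb}}$ upper triangular, and let $U^{\mathrm{sp}}=(u^{\mathrm{sp}}_{ij})$ be given by $u^{\mathrm{sp}}_{1j}=\frac{2V\pi^2}{j+1}$ and $u^{\mathrm{sp}}_{ij}=0$ for $i\ge2$ (so that $\Sigma_n^{\mathrm{sp}}=L^{\mathrm{sp}}U^{\mathrm{sp}}$ with $L^{\mathrm{sp}}$ unit lower triangular with first column $(2/(i+1))_i$ and zeros elsewhere below the diagonal). Then the (unique) LU decomposition $\Sigma_n^{\mathrm{cr}}=L^{\mathrm{cr}}U^{\mathrm{cr}}$ with $L^{\mathrm{cr}}$ unit lower triangular satisfies: (i) for $c\in(0,1]$, $L^{\mathrm{cr}}=L^{\mathrm{sb}}$ and $U^{\mathrm{cr}}=U^{\mathrm{sb}}+cU^{\mathrm{sp}}$;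 (ii) for $c\in(1,\infty)$, $L^{\mathrm{cr}}=L^{\mathrm{sb}}$ and $U^{\mathrm{cr}}=\frac1cU^{\mathrm{sb}}+U^{\mathrm{sp}}$.
   Context: These are the subcritical, supercritical and critical asymptotic covariance matrices of the vector $(\tilde L_t^{(0)},\dots,\tilde L_t^{(n-1)})$ of normalized length power functionals of a random geometric graph in dimension $d=2$ ($\tau_i=i-1$, $\kappa_2=\pi$) on a window of volume $V$; $c=\lim t\delta_t^2$. $[n]=\{1,\dots,n\}$. *)

(* Defs.v *)
From HB Require Import structures.
From mathcomp Require Import all_boot all_order all_algebra.
From mathcomp Require Import all_classical all_reals all_analysis.
Set Implicit Arguments. Unset Strict Implicit. Unset Printing Implicit Defensive.
Import Order.TTheory GRing.Theory Num.Theory.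
Local Open Scope ring_scope.

(* Indices i j : 'I_n are 0-based; the paper's 1-based indices are i.+1, j.+1. *)

Definition Sigma_sb (R : realType) (n : nat) (V : R) : 'M[R]_n :=
  \matrix_(i < n, j < n) (V * pi / ((i.+1 + j.+1)%:R)).

Definition Sigma_sp (R : realType) (n : nat) (V : R) : 'M[R]_n :=
  \matrix_(i < n, j < n) (4 * V * pi ^+ 2 / ((i.+2)%:R * (j.+2)%:R)).

Definition Sigma_cr (R : realType) (n : nat) (V c : R) : 'M[R]_n :=
  if c <= 1 then Sigma_sb n V + c *: Sigma_sp n V
  else c^-1 *: Sigma_sb n V + Sigma_sp n V.

Definition U_sp (R : realType) (n : nat) (V : R) : 'M[R]_n :=
  \matrix_(i < n, j < n)
    (if (i == 0%N :> nat) then 2 * V * pi ^+ 2 / ((j.+2)%:R) else 0).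

Definition unit_lower_triangular (R : ringType) (n : nat) (L : 'M[R]_n) : Prop :=
  (forall i j : 'I_n, (i < j)%N -> L i j = 0) /\ (forall i : 'I_n, L i i = 1).

Definition upper_triangular (R : ringType) (n : nat) (U : 'M[R]_n) : Prop :=
  forall i j : 'I_n, (j < i)%N -> U i j = 0.

Definition is_LU (R : ringType) (n : nat) (A L U : 'M[R]_n) : Prop :=
  [/\ A = L *m U, unit_lower_triangular L & upper_triangular U].

(* Main.v *)
Require Import Defs.
From HB Require Import structures.
From mathcomp Require Import all_boot all_order all_algebra.
From mathcomp Require Import all_classical all_reals all_analysis.
From mathcomp Require Import ring lra.
Import Order.TTheory GRing.Theory Num.Theory.
Local Open Scope ring_scope.
Local Set Implicit Arguments. Local Unset Strict Implicit.

Definition LUf (R : pzRingType) n (A L U : nat -> nat -> R) :=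
  [/\ (forall i j, (i < n)%N -> (j < n)%N -> A i j = \sum_(k < n) L i k * U k j),
      (forall i j, (i < j)%N -> L i j = 0), (forall i, L i i = 1),
      (forall i j, (j < i)%N -> U i j = 0) & (forall i, (i < n)%N -> U i i != 0)].

Definition Lext (R : pzRingType) (c : nat -> R) (L : nat -> nat -> R) i j : R :=
  match i, j with 0, 0 => 1 | 0, _.+1 => 0 | i'.+1, 0 => c i' | i'.+1, j'.+1 => L i' j' end.
Definition Uext (R : pzRingType) (r : nat -> R) (U : nat -> nat -> R) i j : R :=
  match i, j with 0, _ => r j | _.+1, 0 => 0 | i'.+1, j'.+1 => U i' j' end.

Lemma cauchy_LU (R : realFieldType) n : forall (x y a b : nat -> R),
  (forall i j, 0 < x i + y j) -> (forall i j, i != j -> x i != x j) ->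
  (forall i j, i != j -> y i != y j) -> (forall i, a i != 0) -> (forall j, b j != 0) ->
  exists L U, LUf n (fun i j => a i * b j / (x i + y j)) L U.
Proof.
elim: n => [|n IH] x y a b hxy hx hy ha hb.
  exists (fun i j => (i == j)%:R), (fun _ _ => 0); split => //.
  - by move=> i j ij; rewrite ltn_eqF.
  - by move=> i; rewrite eqxx.
have x0 i : (i != 0)%N -> x i - x 0 != 0 by move=> h; rewrite subr_eq0 hx.
have y0 i : (i != 0)%N -> y i - y 0 != 0 by move=> h; rewrite subr_eq0 hy.
have nz i j : x i + y j != 0 by rewrite gt_eqF.
have [L' [U' [HA HL0 HL1 HU0 HUd]]] := IH (fun i => x i.+1) (fun j => y j.+1)
  (fun i => a i.+1 * (x i.+1 - x 0) / (x i.+1 + y 0))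
  (fun j => b j.+1 * (y j.+1 - y 0) / (x 0 + y j.+1)) (fun i j => hxy _ _)
  (fun i j h => hx i.+1 j.+1 h) (fun i j h => hy i.+1 j.+1 h) 
  (fun i => ltac:(rewrite !mulf_neq0 ?invr_eq0 //; exact: x0))
  (fun i => ltac:(rewrite !mulf_neq0 ?invr_eq0 //; exact: y0)).
exists (Lext (fun i => (a i.+1 * b 0 / (x i.+1 + y 0)) / (a 0 * b 0 / (x 0 + y 0))) L').
exists (Uext (fun j => a 0 * b j / (x 0 + y j)) U').
split.
- move=> i j hi hj; rewrite big_ord_recl.
  under eq_bigr => k _ do rewrite lift0.
  case: i hi => [|i] hi; case: j hj => [|j] hj /=.
  + by rewrite mul1r big1 ?addr0 // => k _; rewrite mul0r.
  + by rewrite mul1r big1 ?addr0 // => k _; rewrite mul0r.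
  + rewrite big1 ?addr0; last by move=> k _; rewrite mulr0.
    by field; rewrite !nz ha hb.
  + rewrite -HA //=; field.
    by rewrite !nz ha hb.
- by case=> [|i] [|j] //=; rewrite ltnS; apply: HL0.
- by case=> [|i] //=; apply: HL1.
- by case=> [|i] [|j] //=; rewrite ltnS; apply: HU0.
- case=> [|i] /= hi; last exact: HUd.
  by rewrite !mulf_neq0 ?invr_eq0.
Qed.

Lemma sum_split (R : zmodType) n (F : 'I_n -> R) (p : 'I_n) :
  (forall k : 'I_n, (p < k)%N -> F k = 0) ->
  \sum_(k < n) F k = \sum_(k < n) (if (k < p)%N then F k else 0) + F p.
Proof.
move=> H; rewrite (bigD1 p) //= [X in _ = X + _](bigD1 p) //= ltnn add0r addrC.
congr (_ + _); apply: eq_bigr => k hk.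
case: (ltngtP k p) => [//|/H -> //|/val_inj e].
by rewrite e eqxx in hk.
Qed.

Lemma LU_unique (R : fieldType) n (L1 U1 L2 U2 : 'M[R]_n) :
  L1 *m U1 = L2 *m U2 -> unit_lower_triangular L1 -> upper_triangular U1 ->
  unit_lower_triangular L2 -> upper_triangular U2 -> (forall i, U1 i i != 0) ->
  L1 = L2 /\ U1 = U2.
Proof.
move=> E [L10 L11] U10 [L20 L21] U20 Ud.
have E' i j : \sum_(k < n) L1 i k * U1 k j = \sum_(k < n) L2 i k * U2 k j.
  by have := congr1 (fun M : 'M[R]_n => M i j) E; rewrite !mxE.
suff H m : forall i j : 'I_n, (minn i j < m)%N -> L1 i j = L2 i j /\ U1 i j = U2 i j.
  have H' i j := H n i j (leq_ltn_trans (geq_minl _ _) (ltn_ord i)).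
  by split; apply/matrixP => i j; case: (H' i j).
elim: m => [|m IH] i j; first by rewrite ltn0.
have HU (i' j' : 'I_n) : (i' = m :> nat) -> (i' <= j')%N -> U1 i' j' = U2 i' j'.
  move=> hi hij; have := E' i' j'.
  rewrite (@sum_split _ _ (fun k => L1 i' k * U1 k j') i'); last first.
    by move=> k /L10 ->; rewrite mul0r.
  rewrite (@sum_split _ _ (fun k => L2 i' k * U2 k j') i'); last first.
    by move=> k /L20 ->; rewrite mul0r.
  rewrite L11 L21 !mul1r.
  set S1 := (X in X + _ = _); set S2 := (X in _ = X + _).
  suff -> : S1 = S2 by move/addrI.
  apply: eq_bigr => k _; case: ifP => // hk.
  have [-> _] := IH i' k (leq_ltn_trans (geq_minr _ _) (leq_trans hk (eq_leq hi))).
  by have [_ ->] := IH k j' (leq_ltn_trans (geq_minl _ _) (leq_trans hk (eq_leq hi))).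
have HL (i' j' : 'I_n) : (j' = m :> nat) -> (j' < i')%N -> L1 i' j' = L2 i' j'.
  move=> hj hij; have := E' i' j'.
  rewrite (@sum_split _ _ (fun k => L1 i' k * U1 k j') j'); last first.
    by move=> k /U10 ->; rewrite mulr0.
  rewrite (@sum_split _ _ (fun k => L2 i' k * U2 k j') j'); last first.
    by move=> k /U20 ->; rewrite mulr0.
  rewrite -(HU j' j' hj (leqnn _)).
  set S1 := (X in X + _ = _); set S2 := (X in _ = X + _).
  suff -> : S1 = S2 by move/addrI/mulIf; apply.
  apply: eq_bigr => k _; case: ifP => // hk.
  have [-> _] := IH i' k (leq_ltn_trans (geq_minr _ _) (leq_trans hk (eq_leq hj))).
  by have [_ ->] := IH k j' (leq_ltn_trans (geq_minl _ _) (leq_trans hk (eq_leq hj))).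
move=> hij; case: (ltnP (minn i j) m) => [h|h]; first exact: IH.
have e : minn i j = m by apply/eqP; rewrite eqn_leq h -ltnS hij.
case: (leqP i j) => hle.
  have ei : (i : nat) = m by rewrite -e; apply/esym/minn_idPl.
  split; last exact: HU.
  case: (ltngtP i j) hle => [/[dup] h1 /L10 -> _|//|/val_inj ->]; last by rewrite L11 L21.
  by rewrite L20.
have ej : (j : nat) = m by rewrite -e; apply/esym/minn_idPr/ltnW.
by split; [exact: HL | rewrite U10 ?U20].
Qed.

Local Unset Implicit Arguments.
Theorem theorem8p1 (R : realType) (n : nat) (V c : R) :
  (2 <= n)%N -> 0 < V -> 0 < c ->
  (exists L U : 'M[R]_n, is_LU (Sigma_sb n V) L U) /\
  forall Lsb Usb : 'M[R]_n, is_LU (Sigma_sb n V) Lsb Usb ->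
    let Ucr := if c <= 1 then Usb + c *: U_sp n V
               else c^-1 *: Usb + U_sp n V in
    is_LU (Sigma_cr n V c) Lsb Ucr /\
    (forall Lcr Ucr' : 'M[R]_n, is_LU (Sigma_cr n V c) Lcr Ucr' ->
       Lcr = Lsb /\ Ucr' = Ucr).
Proof.
case: n => [|[|n]] // _ V0 c0.
have pi0 : 0 < pi :> R := pi_gt0 R.
have Vpi0 : 0 < V * pi by rewrite mulr_gt0.
have [Lf [Uf [HA HL0 HL1 HU0 HUd]]] := @cauchy_LU R n.+2 (fun i => (i.+1)%:R)
  (fun i => (i.+1)%:R) (fun _ => V * pi) (fun _ => 1)
  (fun i j => ltac:(by rewrite -natrD ltr0n))
  (fun i j h => ltac:(by rewrite eqr_nat eqSS))
  (fun i j h => ltac:(by rewrite eqr_nat eqSS))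
  (fun _ => lt0r_neq0 Vpi0) (fun _ => oner_neq0 _).
pose Lc : 'M[R]_n.+2 := \matrix_(i, j) Lf i j.
pose Uc : 'M[R]_n.+2 := \matrix_(i, j) Uf i j.
have LUc : is_LU (Sigma_sb n.+2 V) Lc Uc.
  split.
  - apply/matrixP => i j; rewrite /Sigma_sb !mxE.
    have := HA i j (ltn_ord i) (ltn_ord j); rewrite /= natrD mulr1 => ->.
    by apply: eq_bigr => k _; rewrite !mxE.
  - by split => [i j h|i]; rewrite mxE; [exact: HL0|exact: HL1].
  - by move=> i j h; rewrite mxE; exact: HU0.
have Ucd i : Uc i i != 0 by rewrite mxE HUd.
split; first by exists Lc, Uc.
move=> Lsb Usb hsb Ucr; rewrite {}/Ucr.
case: LUc => E1 l1 u1; case: hsb => E2 l2 u2.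
have [eL eU] := LU_unique (etrans (esym E1) E2) l1 u1 l2 u2 Ucd.
have Usbd i : Usb i i != 0 by rewrite -eU.
have col0 i : Sigma_sb n.+2 V i ord0 = Lsb i ord0 * Usb ord0 ord0.
  by rewrite E2 mxE big_ord_recl big1 ?addr0 // => k _; rewrite u2 ?mulr0 // lift0.
have u00 : Usb ord0 ord0 = V * pi / 2.
  by have := col0 ord0; rewrite l2.2 mul1r /Sigma_sb mxE => <-.
have hcol i : Lsb i ord0 = 2 / (i.+2)%:R.
  have := col0 i; rewrite u00 /Sigma_sb mxE addn1 => h.
  apply: (@mulIf _ (V * pi / 2)); first by rewrite mulf_neq0 ?lt0r_neq0 ?invr_gt0.
  rewrite -h; field.
  by rewrite (_ : 2 + i%:R = (2 + i)%:R :> R) ?natrD // pnatr_eq0 addnC.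
have hsp : Sigma_sp n.+2 V = Lsb *m U_sp n.+2 V.
  apply/matrixP => i j; rewrite /Sigma_sp /U_sp !mxE big_ord_recl big1 ?addr0.
  - rewrite !mxE /= hcol; field.
    by rewrite -!(natrD _ 2) !pnatr_eq0 !addn_eq0.
  - by move=> k _; rewrite !mxE lift0 /= mulr0.
have usp0 (i j : 'I_n.+2) : (j < i)%N -> U_sp n.+2 V i j = 0.
  move=> h; rewrite mxE; case: eqP => [e|//].
  by rewrite e in h.
have usp (i : 'I_n.+2) : i != ord0 -> U_sp n.+2 V i i = 0.
  move=> h; rewrite mxE; case: eqP => [e|//].
  by case/eqP: h; apply: val_inj.
have usp00 : U_sp n.+2 V ord0 ord0 = 2 * V * pi ^+ 2 / 2 by rewrite mxE.
have fin U : is_LU (Sigma_cr n.+2 V c) Lsb U -> (forall i, U i i != 0) ->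
    is_LU (Sigma_cr n.+2 V c) Lsb U /\
    (forall Lcr Ucr' : 'M[R]_n.+2, is_LU (Sigma_cr n.+2 V c) Lcr Ucr' ->
       Lcr = Lsb /\ Ucr' = U).
  move=> [E3 l3 u3] hd; split; first by [].
  move=> Lcr Ucr' [E4 l4 u4].
  by have [-> ->] := LU_unique (etrans (esym E3) E4) l3 u3 l4 u4 hd.
case: ifP => hc; apply: fin.
- split => //.
  + by rewrite /Sigma_cr hc E2 hsp mulmxDr scalemxAr.
  + move=> i j h; rewrite !mxE u2 //; case: eqP => [e|_]; [by rewrite e in h | by rewrite ?mulr0 ?addr0].
- move=> i; rewrite !mxE; have [->|h] := eqVneq i ord0.
    by rewrite u00 /= lt0r_neq0 // addr_gt0 ?mulr_gt0 ?divr_gt0 ?exprn_gt0.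
  have hi : (nat_of_ord i == 0%N) = false by apply: negbTE; move: h; rewrite -val_eqE.
  rewrite hi.
  by rewrite mulr0 addr0.
- split => //.
  + by rewrite /Sigma_cr hc E2 hsp mulmxDr scalemxAr.
  + move=> i j h; rewrite !mxE u2 //; case: eqP => [e|_]; [by rewrite e in h | by rewrite ?mulr0 ?addr0].
- move=> i; rewrite !mxE; have [->|h] := eqVneq i ord0.
    by rewrite u00 /= lt0r_neq0 // addr_gt0 ?mulr_gt0 ?divr_gt0 ?exprn_gt0 ?invr_gt0.
  have hi : (nat_of_ord i == 0%N) = false by apply: negbTE; move: h; rewrite -val_eqE.
  rewrite hi.
  by rewrite addr0 mulf_neq0 ?Usbd // invr_eq0 lt0r_neq0.
Qed.
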